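(* Let $m\ge 1$ and let $G,\Sigma\in C^2(\mathbb{R}^m)$. Then $$(\Xi+\nabla_\tau G(\tau))\cdot(\tau+\nabla_\Xi\Sigma(\Xi))\ \ge\ 0\qquad\text{for all }(\Xi,\tau)\in\mathbb{R}^m\times\mathbb{R}^m$$ holds if and only if all three of the following hold: (i) for every $(\Xi,\tau)\in\mathbb{R}^m\times\mathbb{R}^m$: $\Xi+\nabla_\tau G(\tau)=0$ if and only if $\tau+\nabla_\Xi\Sigma(\Xi)=0$; (ii) $G$ is convex; (iii) $\Sigma$ is convex.
   Context: $\nabla_\tau G$ denotes the gradient of $G$ with respect to its argument $\tau\in\mathbb{R}^m$, and $\nabla_\Xi\Sigma$ the gradient of $\Sigma$ with respect to its argument $\Xi\in\mathbb{R}^m$; the dot denotes the Euclidean inner product on $\mathbb{R}^m$. *)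

(* Defs.v *)
(* R : realType, R^m rendered as row vectors 'rV[R]_m. *)
From HB Require Import structures.
From mathcomp Require Import all_boot all_order all_algebra.
From mathcomp Require Import all_classical all_reals all_analysis.
Set Implicit Arguments. Unset Strict Implicit. Unset Printing Implicit Defensive.
Import Order.TTheory GRing.Theory Num.Theory.
Import numFieldNormedType.Exports.
Local Open Scope classical_set_scope.
Local Open Scope ring_scope.

Definition evec (R : realType) (m : nat) (i : 'I_m) : 'rV[R]_m := delta_mx 0 i.

Definition partial (R : realType) (m : nat) (i : 'I_m)
  (f : 'rV[R]_m -> R) : 'rV[R]_m -> R :=
  fun x => ('D_(evec R i) f x : R).

Definition grad (R : realType) (m : nat) (f : 'rV[R]_m -> R) (x : 'rV[R]_m)
  : 'rV[R]_m := \row_i partial i f x.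

Definition dotv (R : realType) (m : nat) (u v : 'rV[R]_m) : R :=
  \sum_(i < m) u 0 i * v 0 i.

Definition C2 (R : realType) (m : nat) (f : 'rV[R]_m -> R) : Prop :=
  continuous f /\
  forall i j : 'I_m,
    (forall x, derivable f x (evec R i)) /\
    continuous (partial i f) /\
    (forall x, derivable (partial i f) x (evec R j)) /\
    continuous (partial j (partial i f)).

(* Main.v *)
Require Import Defs.
From HB Require Import structures.
From mathcomp Require Import all_boot all_order all_algebra.
From mathcomp Require Import all_classical all_reals all_analysis.
From mathcomp Require Import lra.
Import Order.TTheory GRing.Theory Num.Theory.
Import numFieldNormedType.Exports.
Local Open Scope classical_set_scope.
Local Open Scope ring_scope.
Local Open Scope convex_scope.
Lemma dir_is_derive (R : realType) m (f : 'rV[R]_m -> R) i (y : 'rV[R]_m)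
  (Hd : forall x, derivable f x (evec R i)) (t : R) :
  is_derive t (1:R) (fun s : R => f (s *: evec R i + y)) (partial i f (t *: evec R i + y)).
Proof.
have Q (h : R) : (h *: (1:R) + t) *: evec R i + y = h *: evec R i + (t *: evec R i + y) :> 'rV[R]_m.
  by rewrite [h *: 1]mulr1 scalerDl addrA.
have E : (fun h : R => h^-1 *: (((fun s : R => f (s *: evec R i + y)) \o shift t) (h *: 1)
             - f (t *: evec R i + y)))
   = (fun h => h^-1 *: ((f \o shift (t *: evec R i + y)) (h *: evec R i) - f (t *: evec R i + y))).
  by apply/funext => h /=; rewrite Q.
apply: DeriveDef; first by rewrite /derivable E; apply: Hd.
by rewrite /partial /derive E.
Qed.

Lemma deriv_cont (R : realType) (g dg : R -> R) :
  (forall t, is_derive t (1:R) g (dg t)) -> continuous g.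
Proof.
move=> D t; apply/differentiable_continuous/derivable1_diffP.
exact: (@ex_derive _ _ _ _ _ _ _ (D t)).
Qed.

Lemma mvt_dir (R : realType) m (f : 'rV[R]_m -> R) i (y : 'rV[R]_m)
  (Hd : forall x, derivable f x (evec R i)) (s : R) :
  exists c : R, `|c| <= `|s| /\
    f (s *: evec R i + y) - f y = partial i f (c *: evec R i + y) * s.
Proof.
pose g := fun s : R => f (s *: evec R i + y).
have Dg := @dir_is_derive R m f i y Hd.
have cg : continuous g := @deriv_cont _ _ _ Dg.
have g0 : g 0 = f y by rewrite /g scale0r add0r.
case: (leP 0 s) => hs.
  have [c cI E] := @MVT_segment R g _ 0 s hs (fun x _ => Dg x) (continuous_subspaceT cg).
  exists c; split; last by rewrite -g0 E subr0.
  move: cI; rewrite in_itv /= => /andP[c0 cs].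
  by rewrite !ger0_norm // (le_trans c0 cs).
have [c cI E] := @MVT_segment R g _ s 0 (ltW hs) (fun x _ => Dg x) (continuous_subspaceT cg).
exists c; split.
  move: cI; rewrite in_itv /= => /andP[sc c0].
  by rewrite !ler0_norm ?lerN2 // ltW.
rewrite -g0 -[LHS]opprB E add0r mulrN opprK //.
Qed.

Lemma dir_lim (R : realType) m (f : 'rV[R]_m -> R)
  (Hd : forall i x, derivable f x (evec R i))
  (Hc : forall i, continuous (partial i f)) (x v : 'rV[R]_m) :
  (fun h : R => h^-1 *: ((f \o shift x) (h *: v) - f x)) @ 0^' --> dotv (grad f x) v.
Proof.
pose w (k : nat) : 'rV[R]_m := \row_(j < m) (if (j < k)%N then v 0 j else 0).
have w0 : w 0%N = 0 by apply/rowP => j; rewrite !mxE.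
have wm : w m = v by apply/rowP => j; rewrite !mxE ltn_ord.
have wS (i : 'I_m) : w i.+1 = v 0 i *: evec R i + w i.
  apply/rowP => j; rewrite !mxE /= ltnS leq_eqVlt.
  case: (eqVneq j i) => [->|jni]; first by rewrite eqxx ltnn mulr1 addr0.
  have jn : ((j:nat) == i) = false by apply/negbTE.
  by rewrite jn /= mulr0 add0r.
have MV (i : 'I_m) (h : R) := @mvt_dir R m f i (h *: w i + x) (Hd i) (h * v 0 i).
pose C i h := projT1 (cid (MV i h)).
have CP i h := projT2 (cid (MV i h)).
pose P i h := C i h *: evec R i + (h *: w i + x).
have hto0 : (fun h : R => h) @ 0^' --> (0:R).
  by apply: cvg_within_filter; exact: cvg_id.
have Heq : {near 0^', (fun h => \sum_(i < m) partial i f (P i h) * v 0 i) =1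
   (fun h : R => h^-1 *: ((f \o shift x) (h *: v) - f x))}.
  near=> h.
  have hn0 : h != 0 by near: h; exact: nbhs_dnbhs_neq.
  have T := telescope_sumr (fun k => f (h *: w k + x)) (leq0n m).
  rewrite /= w0 wm scaler0 add0r in T; rewrite /= -T.
  have sc (a : R) : h^-1 *: a = h^-1 * a by [].
  rewrite big_mkord sc mulr_sumr; apply: eq_bigr => i _.
  case: (CP i h) => _ E.
  rewrite wS scalerDr scalerA -addrA E /P /C mulrCA mulKf //.
apply: cvg_trans (near_eq_cvg Heq) _.
rewrite /dotv; under eq_bigr do rewrite mxE.
have K := (@cvg_big _ 'I_m +%R 0 xpredT (add_continuous : continuous (fun z : R * R => z.1 + z.2)) _ 0^' (index_enum _)
  (fun i h => partial i f (P i h) * v 0 i) (fun i => partial i f x * v 0 i)).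
have FF : Filter (0^' : set_system R) by exact: _.
apply: (K FF).
move=> i _; apply: cvgMr_tmp.
apply: (@cvg_comp _ _ _ (fun h => P i h) (partial i f) _ (nbhs x)); last exact: Hc.
have -> : x = 0 *: evec R i + (0 *: w i + x) by rewrite !scale0r !add0r.
apply: cvgD; last by apply: cvgD; [apply: cvgZ => //; exact: cvg_cst | exact: cvg_cst].
apply: cvgZ; last exact: cvg_cst.
have hv : (fun h => `|h * v 0 i|) @ 0^' --> (0:R).
  have H1 : (fun h : R => h * v 0 i) @ 0^' --> 0 * v 0 i by apply: cvgMr_tmp.
  have H2 := cvg_norm H1; rewrite mul0r normr0 in H2; exact: H2.
apply: (@squeeze_cvgr R 0^' FF R (fun h => - `|h * v 0 i|) (fun h => `|h * v 0 i|)).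
- near=> h; case: (CP i h) => H _; by rewrite -ler_norml.
- by have := cvgN hv; rewrite oppr0; apply.
- exact: hv.
Unshelve. all: end_near.
Qed.

Lemma line_is_derive (R : realType) m (f : 'rV[R]_m -> R)
  (Hd : forall i x, derivable f x (evec R i))
  (Hc : forall i, continuous (partial i f)) (x v : 'rV[R]_m) (t : R) :
  is_derive t (1:R) (fun s : R => f (s *: v + x)) (dotv (grad f (t *: v + x)) v).
Proof.
have Q (h : R) : (h *: (1:R) + t) *: v + x = h *: v + (t *: v + x) :> 'rV[R]_m.
  by rewrite [h *: 1]mulr1 scalerDl addrA.
have E : (fun h : R => h^-1 *: (((fun s : R => f (s *: v + x)) \o shift t) (h *: 1)
             - f (t *: v + x)))
   = (fun h => h^-1 *: ((f \o shift (t *: v + x)) (h *: v) - f (t *: v + x))).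
  by apply/funext => h /=; rewrite Q.
have L := @dir_lim R m f Hd Hc (t *: v + x) v.
apply: DeriveDef; rewrite /derivable /derive E; first exact: cvgP L.
exact: cvg_lim L.
Qed.

Lemma convE (R : realType) m (x y : convex_lmodType 'rV[R]_m) (t : {i01 R}) :
  x <| t |> y = t%:num *: (x : 'rV[R]_m) + (1 - t%:num) *: (y : 'rV[R]_m).
Proof. by []. Qed.

Lemma dotvB (R : realType) m (a b c : 'rV[R]_m) : dotv (a - b) c = dotv a c - dotv b c.
Proof. by rewrite /dotv -sumrB; apply: eq_bigr => i _; rewrite !mxE mulrBl. Qed.

Lemma dotvBr (R : realType) m (a b c : 'rV[R]_m) : dotv a (b - c) = dotv a b - dotv a c.
Proof. by rewrite /dotv -sumrB; apply: eq_bigr => i _; rewrite !mxE mulrBr. Qed.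

Lemma conv1d (R : realType) (g dg : R -> R) (D : forall t, is_derive t (1:R) g (dg t))
  (M : forall s t, s <= t -> dg s <= dg t) (l : R) (l0 : 0 <= l) (l1 : l <= 1) :
  g l <= l * g 1 + (1 - l) * g 0.
Proof.
have cg : continuous g := @deriv_cont _ _ _ D.
have [c1 c1I E1] := @MVT_segment R g dg 0 l l0 (fun x _ => D x) (continuous_subspaceT cg).
have [c2 c2I E2] := @MVT_segment R g dg l 1 l1 (fun x _ => D x) (continuous_subspaceT cg).
move: c1I c2I; rewrite !in_itv /= => /andP[_ c1l] /andP[lc2 _].
have dle : dg c1 <= dg c2 := M _ _ (le_trans c1l lc2).
have P : 0 <= l * (1 - l) * (dg c2 - dg c1).
  by rewrite !mulr_ge0 // subr_ge0.
have e1 : g l = g 0 + dg c1 * l by rewrite -[g l](subrK (g 0)) E1 subr0 addrC.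
have e2 : g 1 = g l + dg c2 * (1 - l) by rewrite -[g 1](subrK (g l)) E2 addrC.
rewrite e2 e1; nra.
Qed.

Lemma mono_convex (R : realType) m (f : 'rV[R]_m -> R)
  (Hd : forall i x, derivable f x (evec R i))
  (Hc : forall i, continuous (partial i f))
  (Mon : forall (p d : 'rV[R]_m) (t : R), 0 < t ->
     0 <= dotv (grad f (t *: d + p) - grad f p) d) :
  convex_function setT f.
Proof.
move=> t x y _ _.
rewrite convE convRE.
set l := t%:num.
pose d := (x : 'rV[R]_m) - y.
have D := @line_is_derive R m f Hd Hc y d.
have M : forall s u : R, s <= u -> dotv (grad f (s *: d + y)) d <= dotv (grad f (u *: d + y)) d.
  move=> s u; rewrite le_eqVlt => /predU1P[->//|su].
  have := Mon (s *: d + y) d (u - s); rewrite subr_gt0 => /(_ su).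
  by rewrite addrA -scalerDl subrK dotvB subr_ge0.
have := @conv1d R _ _ D M l (ge0 t) (le1 t).
have -> : l *: d + y = l *: (x : 'rV[R]_m) + (1 - l) *: (y : 'rV[R]_m).
  by rewrite /d scalerBr scalerBl scale1r addrA addrAC.
rewrite scale1r scale0r add0r /d subrK; exact.
Qed.

Lemma grad_le (R : realType) m (f : 'rV[R]_m -> R)
  (Hd : forall i x, derivable f x (evec R i))
  (Hc : forall i, continuous (partial i f))
  (Cv : convex_function setT f) (x y : 'rV[R]_m) :
  dotv (grad f x) (y - x) <= f y - f x.
Proof.
set d := y - x.
have L := @dir_lim R m f Hd Hc x d.
have Lr : (fun h : R => h^-1 *: ((f \o shift x) (h *: d) - f x)) @ 0^'+ --> dotv (grad f x) d.
  move=> A /L; rewrite !nbhs_simpl /= /dnbhs /within /=; apply: filterS => z Hz z0.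
  by apply: Hz; rewrite gt_eqF.
apply: (cvgr_to_le Lr); near=> h.
have h0 : 0 < h by near: h; exact: nbhs_right_gt.
have h1 : h < 1 by near: h; exact: nbhs_right_lt ltr01.
have t0 : 0 <= 1 - h by lra.
have t1 : 1 - h <= 1 by lra.
have C := Cv (Itv01 t0 t1) x y (in_setT x) (in_setT y).
rewrite convE convRE /= in C.
have -> : (f \o shift x) (h *: d) = f ((1 - h) *: x + (1 - (1 - h)) *: y).
  rewrite /= /d scalerBl scale1r scalerBr (_ : 1 - (1 - h) = h); last by rewrite opprB addrC subrK.
  by rewrite addrC addrA addrAC.
rewrite -[_ *: _]/(h^-1 * _) mulrC ler_pdivrMr //.
move: C; rewrite /unstable.onem; nra.
Unshelve. all: end_near.
Qed.

Lemma convex_mono (R : realType) m (f : 'rV[R]_m -> R)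
  (Hd : forall i x, derivable f x (evec R i))
  (Hc : forall i, continuous (partial i f))
  (Cv : convex_function setT f) (x y : 'rV[R]_m) :
  0 <= dotv (grad f y - grad f x) (y - x).
Proof.
have A := @grad_le R m f Hd Hc Cv x y.
have B := @grad_le R m f Hd Hc Cv y x.
rewrite dotvB; rewrite !dotvBr in A B *; lra.
Qed.

Lemma dotvC (R : realType) m (a b : 'rV[R]_m) : dotv a b = dotv b a.
Proof. by rewrite /dotv; apply: eq_bigr => i _; rewrite mulrC. Qed.

Lemma dotvZr (R : realType) m (a b : 'rV[R]_m) (t : R) : dotv a (t *: b) = t * dotv a b.
Proof. by rewrite /dotv mulr_sumr; apply: eq_bigr => i _; rewrite !mxE mulrCA. Qed.

Lemma dotv_evec (R : realType) m (i : 'I_m) (w : 'rV[R]_m) (s : R) :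
  dotv (s *: evec R i) w = s * w 0 i.
Proof.
rewrite /dotv (bigD1 i) //= big1 ?addr0.
  by rewrite !mxE eqxx /= eqxx mulr1.
by move=> j ji; rewrite !mxE (negbTE ji) mulr0 mul0r.
Qed.

Lemma zero_lemma (R : realType) m (F : 'rV[R]_m -> 'rV[R]_m)
  (Fc : forall i, continuous (fun x => F x 0 i)) (c x0 : 'rV[R]_m)
  (H : forall v, 0 <= dotv v (c + F (x0 + v))) : c + F x0 = 0.
Proof.
apply/rowP => i; rewrite !mxE.
pose phi (s : R) := c 0 i + F (x0 + s *: evec R i) 0 i.
have phi0 : phi 0 = c 0 i + F x0 0 i by rewrite /phi scale0r addr0.
have Hs s : 0 <= s * phi s.
  by have := H (s *: evec R i); rewrite dotv_evec /phi !mxE.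
have cphi : phi s @[s --> (0:R)] --> phi 0.
  apply: cvgD; first exact: cvg_cst.
  apply: (@cvg_comp _ _ _ (fun s : R => x0 + s *: evec R i) (fun x => F x 0 i) _ (nbhs (x0 + 0 *: evec R i))); last exact: Fc.
  apply: cvgD; first exact: cvg_cst.
  apply: cvgZ; [exact: cvg_id | exact: cvg_cst].
have ge : 0 <= phi 0.
  apply: (cvgr_to_ge (cvg_at_right_filter cphi)); near=> s.
  have s0 : 0 < s by near: s; exact: nbhs_right_gt.
  by have := Hs s; rewrite pmulr_rge0.
have le : phi 0 <= 0.
  apply: (cvgr_to_le (cvg_at_left_filter cphi)); near=> s.
  have s0 : s < 0 by near: s; exact: nbhs_left_lt.
  by have := Hs s; rewrite nmulr_rge0.
by rewrite -phi0; apply/eqP; rewrite eq_le le ge.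
Unshelve. all: end_near.
Qed.

Lemma grad_cont (R : realType) m (f : 'rV[R]_m -> R)
  (Hc : forall i, continuous (partial i f)) i : continuous (fun x => grad f x 0 i).
Proof.
have -> : (fun x => grad f x 0 i) = partial i f by apply/funext => x; rewrite mxE.
exact: Hc.
Qed.

Theorem lemma3p1 (R : realType) (m : nat) (G Sigma : 'rV[R]_m -> R) :
  (1 <= m)%N -> C2 G -> C2 Sigma ->
  ((forall Xi tau : 'rV[R]_m,
      0 <= dotv (Xi + grad G tau) (tau + grad Sigma Xi))
   <->
   [/\ (forall Xi tau : 'rV[R]_m,
          Xi + grad G tau = 0 <-> tau + grad Sigma Xi = 0),
       convex_function setT G &
       convex_function setT Sigma]).
Proof.
move=> _ [_ CG] [_ CS].
have HdG i : forall x, derivable G x (evec R i) := (CG i i).1.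
have HcG i : continuous (partial i G) := (CG i i).2.1.
have HdS i : forall x, derivable Sigma x (evec R i) := (CS i i).1.
have HcS i : continuous (partial i Sigma) := (CS i i).2.1.
split.
  move=> H.
  have Z : forall Xi tau : 'rV[R]_m, Xi + grad G tau = 0 <-> tau + grad Sigma Xi = 0.
    move=> Xi tau; split => E.
      apply: (@zero_lemma _ _ _ (@grad_cont _ _ _ HcS)) => v.
      by have := H (Xi + v) tau; rewrite addrAC E add0r.
    apply: (@zero_lemma _ _ _ (@grad_cont _ _ _ HcG)) => v.
    have := H Xi (tau + v); rewrite addrAC E add0r dotvC; exact.
  split => //.
    apply: (@mono_convex _ _ _ HdG HcG) => p d t t0.
    have := H (- grad G p) (t *: d + p).
    have := proj1 (Z (- grad G p) p) (addNr _).
    rewrite -addrA => ->; rewrite addr0 addrC dotvZr pmulr_rge0 //.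
  apply: (@mono_convex _ _ _ HdS HcS) => p d t t0.
  have := H (t *: d + p) (- grad Sigma p).
  have := proj2 (Z p (- grad Sigma p)) (addNr _).
  rewrite -addrA => ->; rewrite addr0 [- _ + _]addrC dotvC dotvZr pmulr_rge0 //.
move=> [Z CvG CvS] Xi tau.
pose y := - grad G tau.
have E : tau + grad Sigma y = 0 by apply/Z; rewrite addNr.
have ty : tau = - grad Sigma y by apply/eqP; rewrite -addr_eq0 E.
have -> : Xi + grad G tau = Xi - y by rewrite /y opprK.
rewrite ty addrC dotvC.
rewrite ![- _ + _]addrC; exact: (@convex_mono _ _ _ HdS HcS CvS y Xi).
Qed.
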